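(* Let $G$ be a group and $P,Q\in G$, and put $A=PQ$. Call a finite sequence $P_0,P_1,\dots,P_m$ ($m\ge 1$) of elements of $G$ a chain if $P_i\neq P_{i+1}$ and $P_i\neq P_{i+2}$ whenever these indices are in range, and $\{P_iP_{i+1},P_{i+1}P_i\}=\{P_0P_1,P_1P_0\}$ for all $0\le i<m$. Then: (a) if $m\ge 3$ and $P_0,\dots,P_m$ is a chain with $P_0=P$, $P_1=Q$, then (1) $PQ\neq QP$, (2) $PQ^2=Q^2P$, (3) $P^2Q=QP^2$, and for all $0\le i\le m$, $P_i=A^{-i/2}PA^{i/2}$ and $P_i^2=P^2$ if $i$ is even, while $P_i=A^{-(i-1)/2}QA^{(i-1)/2}$ and $P_i^2=Q^2$ if $i$ is odd; (b) conversely, if $P,Q$ satisfy (1), (2), (3), then for every $m\ge 3$ the sequence defined by $P_i=A^{-i/2}PA^{i/2}$ ($i$ even), $P_i=A^{-(i-1)/2}QA^{(i-1)/2}$ ($i$ odd), $0\le i\le m$, is a chain with $P_0=P$, $P_1=Q$, and its terms satisfy $P_i^2=P^2$ for $i$ even and $P_i^2=Q^2$ for $i$ odd.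
   Context: In the group cograph of $G$, the points are the elements of $G$ and the edge joining distinct $P,Q$ is $\{PQ,QP\}$; a chain is thus a sequence of points in which consecutive pairs are all joined by the same edge. *)

(* Defs.v *)
From Stdlib Require Import Arith.

Record group := Group {
  carrier :> Type;
  gmul : carrier -> carrier -> carrier;
  gone : carrier;
  ginv : carrier -> carrier;
  gmulA : forall x y z, gmul x (gmul y z) = gmul (gmul x y) z;
  gmul1l : forall x, gmul gone x = x;
  gmulVl : forall x, gmul (ginv x) x = gone
}.

Arguments gmul {g} _ _.
Arguments gone {g}.
Arguments ginv {g} _.

Fixpoint gpow {G : group} (x : G) (n : nat) : G :=
  match n with
  | O => gone
  | S k => gmul x (gpow x k)
  end.

Definition conjpow {G : group} (A X : G) (k : nat) : G :=
  gmul (ginv (gpow A k)) (gmul X (gpow A k)).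

Definition pair_eq {G : group} (a b c d : G) : Prop :=
  (a = c \/ a = d) /\ (b = c \/ b = d) /\ (c = a \/ c = b) /\ (d = a \/ d = b).

Definition is_chain {G : group} (m : nat) (S : nat -> G) : Prop :=
  1 <= m /\
  (forall i, i + 1 <= m -> S i <> S (i + 1)) /\
  (forall i, i + 2 <= m -> S i <> S (i + 2)) /\
  (forall i, i < m ->
     pair_eq (gmul (S i) (S (i + 1))) (gmul (S (i + 1)) (S i))
             (gmul (S 0) (S 1)) (gmul (S 1) (S 0))).

Definition std_seq {G : group} (P Q : G) (i : nat) : G :=
  if Nat.even i then conjpow (gmul P Q) P (i / 2)
  else conjpow (gmul P Q) Q ((i - 1) / 2).

(* Main.v *)
Require Import Defs.
From Stdlib Require Import Arith Lia.

Section GL.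
Context {G : group}.
Implicit Types x y z a : G.

Lemma gmulV x : gmul x (ginv x) = gone.
Proof.
  rewrite <- (gmul1l _ (gmul x (ginv x))).
  rewrite <- (gmulVl _ (ginv x)) at 1.
  rewrite <- gmulA, (gmulA _ (ginv x) x (ginv x)), gmulVl, gmul1l, gmulVl.
  reflexivity.
Qed.

Lemma gmul1r x : gmul x gone = x.
Proof. rewrite <- (gmulVl _ x), gmulA, gmulV, gmul1l. reflexivity. Qed.

Lemma mulVK x y : gmul (gmul y (ginv x)) x = y.
Proof. rewrite <- gmulA, gmulVl, gmul1r. reflexivity. Qed.

Lemma mulKV x y : gmul (gmul y x) (ginv x) = y.
Proof. rewrite <- gmulA, gmulV, gmul1r. reflexivity. Qed.

Lemma lcancel a x y : gmul a x = gmul a y -> x = y.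
Proof.
  intro h. rewrite <- (gmul1l _ x), <- (gmul1l _ y), <- (gmulVl _ a), <- !gmulA, h.
  reflexivity.
Qed.

Lemma ginv_uniq x y : gmul x y = gone -> ginv x = y.
Proof.
  intro h. apply (lcancel x). rewrite gmulV, h. reflexivity.
Qed.

Lemma ginv_mul x y : ginv (gmul x y) = gmul (ginv y) (ginv x).
Proof.
  apply ginv_uniq. rewrite !gmulA, mulKV, gmulV. reflexivity.
Qed.

Lemma ginv_inv x : ginv (ginv x) = x.
Proof. apply ginv_uniq. apply gmulVl. Qed.

Lemma ginv_one : ginv (@gone G) = gone.
Proof. apply ginv_uniq. apply gmul1l. Qed.

End GL.

Ltac gsimpl := repeat progress (rewrite ?ginv_mul, ?ginv_inv, ?ginv_one, ?gmulA,
  ?gmulVl, ?gmulV, ?gmul1l, ?gmul1r, ?mulVK, ?mulKV).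
Ltac gsimplin h := repeat progress (rewrite ?ginv_mul, ?ginv_inv, ?ginv_one, ?gmulA,
  ?gmulVl, ?gmulV, ?gmul1l, ?gmul1r, ?mulVK, ?mulKV in h).

Section Main.
Context {G : group}.

Lemma gpow_comm (x a : G) k : gmul x a = gmul a x -> gmul x (gpow a k) = gmul (gpow a k) x.
Proof.
  intro h. induction k; simpl. { rewrite gmul1l, gmul1r; reflexivity. }
  rewrite gmulA, h, <- gmulA, IHk, gmulA. reflexivity.
Qed.

Lemma gpowS' (a : G) k : gpow a (S k) = gmul (gpow a k) a.
Proof. simpl. apply gpow_comm. reflexivity. Qed.

Lemma conj_mul (A x y : G) k : conjpow A (gmul x y) k = gmul (conjpow A x k) (conjpow A y k).
Proof. unfold conjpow. gsimpl. reflexivity. Qed.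

Lemma conj_fix (A x : G) k : gmul x A = gmul A x -> conjpow A x k = x.
Proof. intro h. unfold conjpow. rewrite (gpow_comm x A k h). gsimpl. reflexivity. Qed.

Lemma conj_S (A x : G) k : conjpow A x (S k) = conjpow A (gmul (gmul (ginv A) x) A) k.
Proof. unfold conjpow. simpl gpow. gsimpl. reflexivity. Qed.

Lemma conj_S' (A x : G) k : conjpow A x (S k) = gmul (gmul (ginv A) (conjpow A x k)) A.
Proof. unfold conjpow. rewrite gpowS'. gsimpl. reflexivity. Qed.

Lemma std_even (P Q : G) k : std_seq P Q (2*k) = conjpow (gmul P Q) P k.
Proof.
  unfold std_seq. replace (Nat.even (2*k)) with true.
  - rewrite (Nat.mul_comm 2 k), Nat.div_mul by lia. reflexivity.
  - symmetry. apply Nat.even_spec. exists k. reflexivity.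
Qed.

Lemma std_odd (P Q : G) k : std_seq P Q (2*k+1) = conjpow (gmul P Q) Q k.
Proof.
  unfold std_seq. replace (Nat.even (2*k+1)) with false.
  - replace (2*k+1-1) with (k*2) by lia. rewrite Nat.div_mul by lia. reflexivity.
  - rewrite Nat.add_comm, Nat.even_add_mul_2. reflexivity.
Qed.

Lemma std_rec (P Q : G) i :
  std_seq P Q (i+2) = gmul (gmul (ginv (gmul P Q)) (std_seq P Q i)) (gmul P Q).
Proof.
  destruct (Nat.Even_or_Odd i) as [[k ->]|[k ->]].
  - replace (2*k+2) with (2*(S k)) by lia. rewrite !std_even, conj_S'. reflexivity.
  - replace (2*k+1+2) with (2*(S k)+1) by lia. rewrite !std_odd, conj_S'. reflexivity.
Qed.

Section B.
Variables (P Q : G).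
Hypothesis H2 : gmul (gmul P Q) Q = gmul (gmul Q Q) P.
Hypothesis H3 : gmul (gmul P P) Q = gmul (gmul Q P) P.

Lemma AB_comm : gmul (gmul Q P) (gmul P Q) = gmul (gmul P Q) (gmul Q P).
Proof.
  gsimpl. rewrite <- H3.
  replace (gmul (gmul (gmul P Q) Q) P) with (gmul P (gmul (gmul Q Q) P))
    by (gsimpl; reflexivity).
  rewrite <- H2. gsimpl. reflexivity.
Qed.

Lemma core_b i : gmul (std_seq P Q i) (std_seq P Q (i+1)) = gmul P Q /\
                 gmul (std_seq P Q (i+1)) (std_seq P Q i) = gmul Q P.
Proof.
  destruct (Nat.Even_or_Odd i) as [[k ->]|[k ->]].
  - rewrite std_even, std_odd, <- !conj_mul. split; apply conj_fix.
    + reflexivity.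
    + apply AB_comm.
  - replace (2*k+1+1) with (2*(S k)) by lia.
    rewrite std_even, std_odd, conj_S, <- !conj_mul.
    split.
    + replace (gmul Q (gmul (gmul (ginv (gmul P Q)) P) (gmul P Q))) with (gmul P Q)
        by (gsimpl; reflexivity).
      apply conj_fix. reflexivity.
    + replace (gmul (gmul (gmul (ginv (gmul P Q)) P) (gmul P Q)) Q) with (gmul Q P).
      * apply conj_fix. apply AB_comm.
      * apply (lcancel Q). gsimpl. symmetry. exact H2.
Qed.

Lemma sq_b i : (Nat.even i = true -> gpow (std_seq P Q i) 2 = gpow P 2) /\
               (Nat.odd i = true -> gpow (std_seq P Q i) 2 = gpow Q 2).
Proof.
  simpl gpow. rewrite !gmul1r. split; intro h.
  - apply Nat.even_spec in h. destruct h as [k ->].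
    rewrite std_even, <- conj_mul. apply conj_fix. gsimpl.
    replace (gmul (gmul (gmul P Q) P) P) with (gmul P (gmul (gmul Q P) P)) by (gsimpl; reflexivity).
    rewrite <- H3. gsimpl. reflexivity.
  - apply Nat.odd_spec in h. destruct h as [k ->].
    rewrite std_odd, <- conj_mul. apply conj_fix. gsimpl. rewrite <- H2. reflexivity.
Qed.

End B.
End Main.

Theorem theorem6p2 (G : group) (P Q : G) :
  (forall (m : nat) (S : nat -> G),
     3 <= m -> is_chain m S -> S 0 = P -> S 1 = Q ->
     gmul P Q <> gmul Q P /\
     gmul P (gpow Q 2) = gmul (gpow Q 2) P /\
     gmul (gpow P 2) Q = gmul Q (gpow P 2) /\
     (forall i, i <= m ->
        (Nat.even i = true ->
           S i = conjpow (gmul P Q) P (i / 2) /\ gpow (S i) 2 = gpow P 2) /\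
        (Nat.odd i = true ->
           S i = conjpow (gmul P Q) Q ((i - 1) / 2) /\ gpow (S i) 2 = gpow Q 2)))
  /\
  (gmul P Q <> gmul Q P ->
   gmul P (gpow Q 2) = gmul (gpow Q 2) P ->
   gmul (gpow P 2) Q = gmul Q (gpow P 2) ->
   forall m : nat, 3 <= m ->
     is_chain m (std_seq P Q) /\ std_seq P Q 0 = P /\ std_seq P Q 1 = Q /\
     (forall i, i <= m ->
        (Nat.even i = true -> gpow (std_seq P Q i) 2 = gpow P 2) /\
        (Nat.odd i = true -> gpow (std_seq P Q i) 2 = gpow Q 2))).
Proof.
  assert (s0 : std_seq P Q 0 = P) by (unfold std_seq, conjpow; simpl; gsimpl; reflexivity).
  assert (s1 : std_seq P Q 1 = Q) by (unfold std_seq, conjpow; simpl; gsimpl; reflexivity).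
  split.
  - intros m S hm [hm1 [hne1 [hne2 hpair]]] e0 e1.
    assert (hAB : gmul P Q <> gmul Q P).
    { intro hc. destruct (hpair 1 ltac:(lia)) as [p1 _].
      rewrite e0, e1 in p1. simpl (1+1) in p1. rewrite <- hc in p1.
      apply (hne2 0 ltac:(lia)). simpl (0+2). rewrite e0. apply (lcancel Q).
      destruct p1 as [p|p]; rewrite p, hc; reflexivity. }
    assert (claim : forall i, i + 1 <= m ->
              gmul (S i) (S (i+1)) = gmul P Q /\ gmul (S (i+1)) (S i) = gmul Q P).
    { induction i as [|i IH]; intro hi.
      - simpl. rewrite e0, e1. split; reflexivity.
      - destruct (IH ltac:(lia)) as [IH1 IH2].
        specialize (hpair (i+1) ltac:(lia)). rewrite e0, e1 in hpair.
        replace (i+1+1) with (i+2) in hpair by lia.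
        replace (Datatypes.S i + 1) with (i+2) by lia. replace (Datatypes.S i) with (i+1) by lia.
        destruct hpair as [p1 [p2 [p3 p4]]].
        assert (x : gmul (S (i+1)) (S (i+2)) = gmul P Q).
        { destruct p1 as [x|x]; auto. exfalso. apply (hne2 i ltac:(lia)).
          apply (lcancel (S (i+1))). rewrite x, IH2. reflexivity. }
        split; auto.
        destruct p2 as [y|y]; auto. exfalso.
        destruct p4 as [b|b]; apply hAB; rewrite b; [rewrite x|rewrite y]; reflexivity. }
    assert (rec : forall i, i + 2 <= m ->
              S (i+2) = gmul (gmul (ginv (gmul P Q)) (S i)) (gmul P Q)).
    { intros i hi. destruct (claim i ltac:(lia)) as [c1 _].
      destruct (claim (i+1) ltac:(lia)) as [c2 _].
      replace (i+1+1) with (i+2) in c2 by lia.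
      assert (h1 : S (i+1) = gmul (ginv (S i)) (gmul P Q)) by (rewrite <- c1; gsimpl; reflexivity).
      assert (h2 : S (i+2) = gmul (ginv (S (i+1))) (gmul P Q)) by (rewrite <- c2; gsimpl; reflexivity).
      rewrite h2, h1. gsimpl. reflexivity. }
    assert (ident : forall n i, i <= n -> i <= m -> S i = std_seq P Q i).
    { induction n as [|n IH]; intros i hi hm'.
      - replace i with 0 by lia. rewrite e0, s0. reflexivity.
      - destruct (Nat.eq_dec i (Datatypes.S n)) as [->|ne]; [|apply IH; lia].
        destruct n as [|n].
        + rewrite e1, s1. reflexivity.
        + replace (Datatypes.S (Datatypes.S n)) with (n+2) by lia.
          rewrite rec, std_rec, (IH n) by lia. reflexivity. }
    assert (H2' : gmul (gmul P Q) Q = gmul (gmul Q Q) P).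
    { destruct (claim 1 ltac:(lia)) as [_ c]. simpl (1+1) in c.
      pose proof (rec 0 ltac:(lia)) as r2. simpl (0+2) in r2.
      rewrite r2, e1, e0 in c.
      gsimplin c. apply (f_equal (gmul Q)) in c. gsimplin c. exact c. }
    assert (H3' : gmul (gmul P P) Q = gmul (gmul Q P) P).
    { destruct (claim 2 ltac:(lia)) as [_ c]. simpl (2+1) in c.
      pose proof (rec 0 ltac:(lia)) as r2. simpl (0+2) in r2.
      pose proof (rec 1 ltac:(lia)) as r3. simpl (1+2) in r3.
      rewrite r3, r2, e1, e0 in c.
      gsimplin c. apply (f_equal (gmul (gmul P Q))) in c. gsimplin c.
      rewrite H2' in c. apply (f_equal (gmul (ginv Q))) in c. gsimplin c. exact c. }
    split; [exact hAB|]. split; [simpl; gsimpl; exact H2'|].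
    split; [simpl; gsimpl; exact H3'|].
    intros i hi. rewrite (ident i i) by lia. destruct (sq_b P Q H2' H3' i) as [q1 q2].
    split; intro h; [specialize (q1 h)|specialize (q2 h)]; split; auto.
    + apply Nat.even_spec in h. destruct h as [k ->].
      rewrite std_even. replace (2*k/2) with k; [reflexivity|].
      rewrite Nat.mul_comm, Nat.div_mul; lia.
    + apply Nat.odd_spec in h. destruct h as [k ->].
      rewrite std_odd. replace ((2*k+1-1)/2) with k; [reflexivity|].
      replace (2*k+1-1) with (k*2) by lia. rewrite Nat.div_mul; lia.
  - intros hAB h2 h3 m hm.
    assert (H2' : gmul (gmul P Q) Q = gmul (gmul Q Q) P) by (simpl in h2; gsimplin h2; exact h2).
    assert (H3' : gmul (gmul P P) Q = gmul (gmul Q P) P) by (simpl in h3; gsimplin h3; exact h3).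
    split; [|split; [exact s0|split; [exact s1|intros i _; apply sq_b; assumption]]].
    split; [lia|]. split; [|split].
    + intros i _ e. destruct (core_b P Q H2' H3' i) as [c1 c2].
      rewrite e in c1. rewrite e, c1 in c2. exact (hAB c2).
    + intros i _ e. destruct (core_b P Q H2' H3' i) as [_ c2].
      destruct (core_b P Q H2' H3' (i+1)) as [c1 _].
      replace (i+1+1) with (i+2) in c1 by lia. rewrite <- e, c2 in c1. exact (hAB (eq_sym c1)).
    + intros i _. destruct (core_b P Q H2' H3' i) as [c1 c2].
      destruct (core_b P Q H2' H3' 0) as [d1 d2]. simpl (0+1) in d1, d2.
      rewrite c1, c2, d1, d2. unfold pair_eq. tauto.
Qed.
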